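(* Let $n\ge1$, $k\in[n]$, and $f(S)=\min(|S|,k)$ for $S\subseteq[n]$. For every $x\in[0,1]$ and $\mathbf{x}=(x,\dots,x)\in[0,1]^n$, $f^{+}(\mathbf{x})/f^{++}(\mathbf{x})\le 4k/(4k-1)$ (with the convention $0/0=1$). Moreover, when $n$ is even, $k=n/2$ and $x=1/2$, equality $f^{+}(\mathbf{x})/f^{++}(\mathbf{x})=4k/(4k-1)$ holds.
   Context: $[n]=\{1,\dots,n\}$. For $f:2^{[n]}\to\mathbb{R}_+$ and $\mathbf{x}\in[0,1]^n$: the concave closure $f^{+}(\mathbf{x})=\max\sum_{S\subseteq[n]}\theta(S)f(S)$ over $\theta:2^{[n]}\to\mathbb{R}_{\ge0}$ with $\sum_S\theta(S)=1$ and $\sum_{S\ni i}\theta(S)=x_i$ for all $i$; the upper pairwise independent extension $f^{++}(\mathbf{x})$ is the same maximum with the additional constraints $\sum_{S\ni i,j}\theta(S)=x_ix_j$ for all $i<j$. *)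

(* Defs.v *)
From HB Require Import structures.
From mathcomp Require Import all_boot all_order all_algebra.
From mathcomp Require Import boolp classical_sets reals.
Set Implicit Arguments. Unset Strict Implicit. Unset Printing Implicit Defensive.
Import Order.TTheory GRing.Theory Num.Theory.
Local Open Scope ring_scope.
Local Open Scope classical_set_scope.

Definition closure_feasible (R : realType) (n : nat)
  (x : 'I_n -> R) (theta : {ffun {set 'I_n} -> R}) : Prop :=
  (forall S, 0 <= theta S) /\
  \sum_(S : {set 'I_n}) theta S = 1 /\
  (forall i : 'I_n, \sum_(S : {set 'I_n} | i \in S) theta S = x i).

Definition pairwise_feasible (R : realType) (n : nat)
  (x : 'I_n -> R) (theta : {ffun {set 'I_n} -> R}) : Prop :=
  closure_feasible x theta /\
  (forall i j : 'I_n, (i < j)%N ->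
     \sum_(S : {set 'I_n} | (i \in S) && (j \in S)) theta S = x i * x j).

Definition lp_value (R : realType) (n : nat) (f : {set 'I_n} -> R)
  (theta : {ffun {set 'I_n} -> R}) : R :=
  \sum_(S : {set 'I_n}) theta S * f S.

(* concave closure f^+(x): the maximum (= supremum; it is attained) of the LP *)
Definition concave_closure (R : realType) (n : nat) (f : {set 'I_n} -> R)
  (x : 'I_n -> R) : R :=
  sup [set v | exists theta, closure_feasible x theta /\ v = lp_value f theta].

Definition upper_pairwise_ext (R : realType) (n : nat) (f : {set 'I_n} -> R)
  (x : 'I_n -> R) : R :=
  sup [set v | exists theta, pairwise_feasible x theta /\ v = lp_value f theta].

Definition budget_fun (R : realType) (n k : nat) (S : {set 'I_n}) : R :=
  (minn #|S| k)%:R.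

(* Main.v *)
Require Import Defs.
From HB Require Import structures.
From mathcomp Require Import all_boot all_order all_algebra.
From mathcomp Require Import boolp classical_sets reals.
From mathcomp Require Import lra zify ring.
From mathcomp Require Import fintype finset.
Import Order.TTheory GRing.Theory Num.Theory.
Local Open Scope ring_scope.
Set Implicit Arguments. Unset Strict Implicit. Unset Printing Implicit Defensive.

Section Comb.
Variable R : realType.
Variable n : nat.

Lemma card_le_n (S : {set 'I_n}) : (#|S| < n.+1)%N.
Proof. by rewrite ltnS -[X in (_ <= X)%N](card_ord n) max_card. Qed.

Lemma sum_by_card (P : pred {set 'I_n}) (G : nat -> R) :
  \sum_(S : {set 'I_n} | P S) G #|S| =
  \sum_(m < n.+1) G m *+ #|[set S : {set 'I_n} | P S & #|S| == m]|.
Proof.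
transitivity (\sum_(S : {set 'I_n} | P S) \sum_(m < n.+1 | #|S| == m) G m).
  apply: eq_bigr => S _; rewrite (big_pred1 (inord #|S|)) ?inordK ?card_le_n //.
  by move=> m /=; rewrite -val_eqE /= inordK ?card_le_n // eq_sym.
rewrite (exchange_big_dep predT) //=; apply: eq_bigr => m _.
rewrite -sumr_const; apply: eq_bigl => S; by rewrite inE.
Qed.

Lemma card_sup (A : {set 'I_n}) m :
  #|[set S : {set 'I_n} | A \subset S & #|S| == (m + #|A|)%N]| = 'C(n - #|A|, m).
Proof.
have cC : (n - #|A|)%N = #|~: A| by rewrite -[X in (X - _)%N](card_ord n) -(cardsC A) addKn.
rewrite cC -cards_draws.
have -> : [set S : {set 'I_n} | A \subset S & #|S| == (m + #|A|)%N] =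
   (fun B => B :|: A) @: [set B : {set 'I_n} | B \subset ~: A & #|B| == m].
  apply/setP => S; rewrite inE; apply/andP/imsetP.
    move=> [AS /eqP cS]; exists (S :\: A).
      by rewrite inE subsetDr /= cardsD (setIidPr AS) cS addnK.
    apply/setP => y; rewrite !inE; case: (boolP (y \in A)) => yA /=.
      by rewrite (subsetP AS) ?orbT.
    idtac.
    by rewrite orbF.
  move=> [B]; rewrite inE => /andP[BA /eqP cB] ->; split; first by rewrite subsetUr.
  rewrite cardsU; move: BA; rewrite subsets_disjoint setCK => /disjoint_setI0 ->.
  by rewrite cards0 subn0 cB.
rewrite card_in_imset // => B1 B2; rewrite !inE => /andP[B1A _] /andP[B2A _] e.
have h : forall B : {set 'I_n}, B \subset ~: A -> (B :|: A) :\: A = B.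
  move=> B BA; rewrite setDUl setDv setU0; apply/setDidPl.
  by move: BA; rewrite subsets_disjoint setCK disjoint_sym.
by rewrite -(h _ B1A) e h.
Qed.


Lemma ratio_nat (p : R) (C D a b : nat) : C != 0%N -> b != 0%N -> (C * a = b * D)%N ->
  p / C%:R *+ D = p * a%:R / b%:R.
Proof.
move=> C0 b0 e.
have Cr : (C%:R : R) != 0 by rewrite pnatr_eq0.
have br : (b%:R : R) != 0 by rewrite pnatr_eq0.
rewrite -mulr_natr.
have -> : (D%:R : R) = C%:R * a%:R / b%:R.
  by apply: (mulIf br); rewrite mulfVK // -!natrM e mulnC.
by rewrite !mulrA mulfVK.
Qed.

Definition symth (p : nat -> R) : {ffun {set 'I_n} -> R} :=
  [ffun S : {set 'I_n} => p #|S| / ('C(n, #|S|))%:R].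

Lemma symth_total (p : nat -> R) (g : nat -> R) :
  \sum_(S : {set 'I_n}) symth p S * g #|S| = \sum_(m < n.+1) p m * g m.
Proof.
rewrite (eq_bigr (fun S : {set 'I_n} => (p #|S| / ('C(n, #|S|))%:R * g #|S|))); last by move=> S _; rewrite ffunE.
rewrite (sum_by_card predT (fun m => p m / ('C(n, m))%:R * g m)).
apply: eq_bigr => m _.
have -> : #|[set S : {set 'I_n} | predT S & #|S| == m]| = 'C(n, m).
  by rewrite -[X in 'C(X, _)](card_ord n) -card_draws; apply: eq_card => S; rewrite !inE.
rewrite mulrAC (@ratio_nat _ _ _ 1%N 1%N) ?mulr1 ?divr1 //.
  by rewrite -lt0n bin_gt0 -ltnS ltn_ord.
by rewrite muln1 mul1n.
Qed.

Lemma symth_marg (p : nat -> R) (i : 'I_n) :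
  \sum_(S : {set 'I_n} | i \in S) symth p S = \sum_(m < n.+1) p m * m%:R / n%:R.
Proof.
rewrite (eq_bigr (fun S : {set 'I_n} => (p #|S| / ('C(n, #|S|))%:R))); last by move=> S _; rewrite ffunE.
rewrite (sum_by_card (fun S => i \in S) (fun m => p m / ('C(n, m))%:R)).
apply: eq_bigr => -[m ltm] _ /=.
case: m ltm => [|m] ltm.
  rewrite mulr0 mul0r.
  suff -> : [set S : {set 'I_n} | i \in S & #|S| == 0%N] = set0 by rewrite cards0.
  apply/setP => S; rewrite !inE; apply/negbTE; apply/andP => -[iS /eqP /cards0_eq S0].
  by move: iS; rewrite S0 inE.
have -> : [set S : {set 'I_n} | i \in S & #|S| == m.+1] =
          [set S : {set 'I_n} | [set i] \subset S & #|S| == (m + #|[set i]|)%N].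
  by apply/setP => S; rewrite !inE sub1set cards1 addn1.
rewrite card_sup cards1 subn1.
apply: ratio_nat; first by rewrite -lt0n bin_gt0.
  by move: ltm; rewrite -lt0n; lia.
by rewrite mulnC -mul_bin_diag.
Qed.

Lemma symth_pair (p : nat -> R) (i j : 'I_n) : i != j ->
  \sum_(S : {set 'I_n} | (i \in S) && (j \in S)) symth p S =
  \sum_(m < n.+1) p m * (m%:R * (m%:R - 1)) / (n%:R * (n%:R - 1)).
Proof.
move=> ij.
have n2 : (2 <= n)%N.
  have := max_card [set i; j]; rewrite cards2 ij card_ord; done.
rewrite (eq_bigr (fun S : {set 'I_n} => (p #|S| / ('C(n, #|S|))%:R))); last by move=> S _; rewrite ffunE.
rewrite (sum_by_card (fun S => (i \in S) && (j \in S)) (fun m => p m / ('C(n, m))%:R)).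
apply: eq_bigr => -[m ltm] _ /=.
have A2 : #|[set i; j]| = 2%N by rewrite cards2 ij.
case: m ltm => [|[|m]] ltm.
- rewrite mul0r mulr0 mul0r.
  suff -> : [set S : {set 'I_n} | (i \in S) && (j \in S) & #|S| == 0%N] = set0 by rewrite cards0.
  apply/setP => S; rewrite !inE; apply/negbTE; apply/andP => -[/andP[iS _] /eqP /cards0_eq S0].
  by move: iS; rewrite S0 inE.
- rewrite subrr mulr0 mulr0 mul0r.
  suff -> : [set S : {set 'I_n} | (i \in S) && (j \in S) & #|S| == 1%N] = set0 by rewrite cards0.
  apply/setP => S; rewrite !inE; apply/negbTE; apply/andP => -[/andP[iS jS] /eqP c1].
  have : (#|[set i; j]| <= #|S|)%N by apply: subset_leq_card; rewrite subUset !sub1set iS jS.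
  by rewrite A2 c1.
have -> : [set S : {set 'I_n} | (i \in S) && (j \in S) & #|S| == m.+2] =
          [set S : {set 'I_n} | [set i; j] \subset S & #|S| == (m + #|[set i; j]|)%N].
  by apply/setP => S; rewrite !inE subUset !sub1set A2 addn2.
rewrite card_sup A2.
have e1 : ((m.+2)%:R - 1 : R) = (m.+1)%:R by rewrite -natr1 addrK.
have e2 : (n%:R - 1 : R) = (n.-1)%:R by rewrite -subn1 natrB ?(ltnW n2).
rewrite e1 e2 -!natrM.
apply: ratio_nat; first by rewrite -lt0n bin_gt0.
  by rewrite muln_eq0 negb_or -!lt0n (leq_trans _ n2) //= -ltnS prednK (leq_trans _ n2).
have h1 := mul_bin_diag n m.+1.
have h2 := mul_bin_diag n.-1 m.
rewrite (_ : (n - 2)%N = n.-1.-1); last by rewrite -subn1 -subn1 -subnDA.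
rewrite -[in RHS]mulnA h2.
by rewrite [RHS]mulnCA h1; nia.
Qed.


Lemma sum_delta (c : nat) (F : nat -> R) : (c <= n)%N ->
  \sum_(m < n.+1) (m == c :> nat)%:R * F m = F c.
Proof.
move=> cn; rewrite (bigD1 (inord c)) //= inordK // eqxx mul1r big1 ?addr0 //.
move=> m mc; case: eqP => [e|]; last by rewrite mul0r.
by move: mc; rewrite -val_eqE /= inordK // e eqxx.
Qed.

Definition p3 (c a d : nat) (pc pa pd : R) : nat -> R :=
  fun m => (m == c)%:R * pc + (m == a)%:R * pa + (m == d)%:R * pd.

Lemma sum_p3 c a d pc pa pd (h : nat -> R) : (c <= n)%N -> (a <= n)%N -> (d <= n)%N ->
  \sum_(m < n.+1) p3 c a d pc pa pd m * h m = pc * h c + pa * h a + pd * h d.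
Proof.
move=> cn an dn; rewrite /p3.
rewrite (eq_bigr (fun m : 'I_n.+1 => (m == c :> nat)%:R * (pc * h m) +
   (m == a :> nat)%:R * (pa * h m) + (m == d :> nat)%:R * (pd * h m))); last first.
  by move=> m _; rewrite !mulrDl !mulrA.
by rewrite !big_split /= (sum_delta (fun m => pc * h m)) // (sum_delta (fun m => pa * h m)) // (sum_delta (fun m => pd * h m)).
Qed.


Lemma three_point_feas (k : nat) (x : R) c a d pc pa pd :
  (c <= n)%N -> (a <= n)%N -> (d <= n)%N ->
  0 <= pc -> 0 <= pa -> 0 <= pd -> pc + pa + pd = 1 ->
  pc * c%:R + pa * a%:R + pd * d%:R = n%:R * x ->
  pc * (c%:R * (c%:R - 1)) + pa * (a%:R * (a%:R - 1)) + pd * (d%:R * (d%:R - 1))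
    = n%:R * (n%:R - 1) * x ^+ 2 ->
  pairwise_feasible (fun _ => x) (symth (p3 c a d pc pa pd)) /\
  lp_value (@budget_fun R n k) (symth (p3 c a d pc pa pd)) =
    pc * (minn c k)%:R + pa * (minn a k)%:R + pd * (minn d k)%:R.
Proof.
move=> cn an dn pc0 pa0 pd0 s1 s2 s3.
split; last first.
  rewrite /lp_value /budget_fun.
  rewrite (symth_total _ (fun m => (minn m k)%:R)).
  exact: (sum_p3 pc pa pd (fun m => (minn m k)%:R) cn an dn).
split; first split.
- move=> S; rewrite ffunE; apply: divr_ge0 => //.
  by rewrite /p3 !addr_ge0 // mulr_ge0.
- split.
    have := symth_total (p3 c a d pc pa pd) (fun _ => 1).
    rewrite (sum_p3 pc pa pd (fun _ => 1) cn an dn) !mulr1 s1 => <-.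
    by apply: eq_bigr => S _; rewrite mulr1.
  move=> i.
  have n0 : (n%:R : R) != 0 by rewrite pnatr_eq0 -lt0n (leq_ltn_trans _ (ltn_ord i)).
  rewrite symth_marg -mulr_suml.
  rewrite (eq_bigr (fun m : 'I_n.+1 => p3 c a d pc pa pd m * (fun m : nat => m%:R) m)) //.
  by rewrite (sum_p3 pc pa pd (fun m : nat => m%:R) cn an dn) s2 mulrC mulKf.
move=> i j ij.
have ij' : i != j by rewrite neq_ltn ij.
have n2 : (1 < n)%N by have := ltn_ord j; move: ij; lia.
have nn0 : (n%:R * (n%:R - 1) : R) != 0.
  rewrite mulf_eq0 negb_or pnatr_eq0 subr_eq0 (_ : (1 : R) = 1%:R) // eqr_nat; apply/andP; split; lia.
rewrite symth_pair // -mulr_suml.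
rewrite (eq_bigr (fun m : 'I_n.+1 => p3 c a d pc pa pd m * (fun m : nat => m%:R * (m%:R - 1)) m)) //.
by rewrite (sum_p3 pc pa pd (fun m : nat => m%:R * (m%:R - 1)) cn an dn) s3 mulrC mulKf.
Qed.

End Comb.

Definition lagp (R : realType) (c a d mu s : R) := (s - (a + d) * mu + a * d) / ((c - a) * (c - d)).

Lemma lag_id (R : realType) (c a d mu s : R) : c != a -> c != d -> a != d ->
  [/\ lagp c a d mu s + lagp a c d mu s + lagp d c a mu s = 1,
      lagp c a d mu s * c + lagp a c d mu s * a + lagp d c a mu s * d = mu &
      lagp c a d mu s * c ^+ 2 + lagp a c d mu s * a ^+ 2 + lagp d c a mu s * d ^+ 2 = s].
Proof.
move=> ca cd ad.
have h1 : c - a != 0 by rewrite subr_eq0.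
have h2 : c - d != 0 by rewrite subr_eq0.
have h3 : a - d != 0 by rewrite subr_eq0.
have h4 : a - c != 0 by rewrite subr_eq0 eq_sym.
have h5 : d - c != 0 by rewrite subr_eq0 eq_sym.
have h6 : d - a != 0 by rewrite subr_eq0 eq_sym.
rewrite /lagp; split; field; by rewrite h1 h2 h3 h4 h5 h6.
Qed.

Lemma feas3 (R : realType) (n k : nat) (x : R) (c a d : nat) :
  (c <= n)%N -> (a <= n)%N -> (d <= n)%N -> c <> a -> c <> d -> a <> d ->
  let mu := n%:R * x in let s := n%:R * x + n%:R * (n%:R - 1) * x ^+ 2 in
  let pc := lagp (c%:R : R) a%:R d%:R mu s in
  let pa := lagp (a%:R : R) c%:R d%:R mu s in
  let pd := lagp (d%:R : R) c%:R a%:R mu s in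
  0 <= pc -> 0 <= pa -> 0 <= pd ->
  exists theta, pairwise_feasible (fun _ => x) theta /\
  lp_value (@budget_fun R n k) theta =
    pc * (minn c k)%:R + pa * (minn a k)%:R + pd * (minn d k)%:R.
Proof.
move=> cn an dn ca cd ad mu s pc pa pd pc0 pa0 pd0.
have [ca' cd' ad'] : [/\ (c%:R : R) != a%:R, (c%:R : R) != d%:R & (a%:R : R) != d%:R].
  by rewrite !eqr_nat; split; apply/eqP.
have [e1 e2 e3] := @lag_id R _ _ _ mu s ca' cd' ad'.
exists (symth n (p3 c a d pc pa pd)).
apply: three_point_feas => //.
have -> : n%:R * (n%:R - 1) * x ^+ 2 = s - mu by rewrite /s /mu; ring.
rewrite /pc /pa /pd; set A := lagp _ _ _ _ _ in e1 e2 e3 *; set B := lagp _ _ _ _ _ in e1 e2 e3 *; set C := lagp _ _ _ _ _ in e1 e2 e3 *.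
rewrite -[in RHS]e3 -[in RHS]e2; ring.
Qed.

Lemma div_nn (R : realType) (N D : R) : N <= 0 -> D <= 0 -> 0 <= N / D.
Proof. by move=> N0 D0; rewrite -mulrNN -invrN divr_ge0 // oppr_ge0. Qed.

Lemma div_pp (R : realType) (N D : R) : 0 <= N -> 0 <= D -> 0 <= N / D.
Proof. by move=> N0 D0; rewrite divr_ge0. Qed.

Lemma min_l (R : realType) (a b c v : R) : 0 <= c -> c * a <= v -> c * Num.min a b <= v.
Proof. move=> c0 h; apply: le_trans h; apply: ler_wpM2l => //; by rewrite ge_min lexx. Qed.
Lemma min_r (R : realType) (a b c v : R) : 0 <= c -> c * b <= v -> c * Num.min a b <= v.
Proof. move=> c0 h; apply: le_trans h; apply: ler_wpM2l => //; by rewrite ge_min lexx orbT. Qed.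

Definition goodP (R : realType) (n k : nat) (x : R) :=
  exists theta, pairwise_feasible (fun _ => x) theta /\
  (4 * k%:R - 1) * Num.min (n%:R * x) k%:R <= 4 * k%:R * lp_value (@budget_fun R n k) theta.

Lemma caseA (R : realType) (n k : nat) (x : R) : (2 <= n)%N -> (1 <= k <= n)%N -> 0 < x < 1 ->
  x * (n%:R - 1) < k%:R - 1 -> goodP n k x.
Proof.
move=> n2 /andP[k1 kn] /andP[x0 x1] bk.
rewrite /goodP.
have n1r : (1 : R) <= n%:R by rewrite (_ : (1 : R) = 1%:R) // ler_nat (ltnW n2).
have Kn : (k%:R : R) <= n%:R by rewrite ler_nat.
set N := (n%:R : R) in n1r Kn bk *.
set K := (k%:R : R) in Kn bk *.
set b := x * (N - 1) in bk *.
have b0 : 0 <= b by rewrite /b mulr_ge0 ?subr_ge0 // ltW.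
set t := Num.truncn b.
have /andP[tb bt] := truncn_itv b0; rewrite -/t in tb bt.
set T := (t%:R : R) in tb bt.
have hA : ((t.+1)%:R : R) = T + 1 by rewrite -natr1.
rewrite hA in bt.
have tk : (t.+2 <= k)%N.
  have : ((t.+1)%:R : R) < k%:R by rewrite hA; lra.
  by rewrite ltr_nat.
have tK : T + 1 + 1 <= K.
  have : ((t.+2)%:R : R) <= k%:R by rewrite ler_nat.
  by rewrite -natr1 hA.
set mu := N * x. set s := N * x + N * (N - 1) * x ^+ 2.
have mub : mu = b + x by rewrite /mu /b; ring.
have muK : mu <= K by lra.
have x0' : 0 <= x by apply: ltW.
have mu0 : 0 <= mu by rewrite /mu mulr_ge0 //; lra.
have h0 : 0 <= lagp (0%:R : R) (t.+1)%:R K mu s.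
  rewrite /lagp hA mulr0n; apply: div_pp.
    have -> : s - (T + 1 + K) * mu + (T + 1) * K = (T + 1 - b) * (K - mu) + x * (N - K).
      by rewrite /s /mu /b; ring.
    by apply: addr_ge0; apply: mulr_ge0; lra.
  by rewrite !sub0r mulrNN mulr_ge0 //; lra.
have h1 : 0 <= lagp ((t.+1)%:R : R) 0%:R K mu s.
  rewrite /lagp hA mulr0n; apply: div_nn.
    have -> : s - (0 + K) * mu + 0 * K = mu * (1 + b - K).
      by rewrite /s /mu /b; ring.
    by rewrite mulr_ge0_le0 //; lra.
  by rewrite subr0 mulr_ge0_le0 //; lra.
have h2 : 0 <= lagp K 0%:R ((t.+1)%:R) mu s.
  rewrite /lagp hA mulr0n; apply: div_pp.
    have -> : s - (0 + (T + 1)) * mu + 0 * (T + 1) = mu * (1 + b - (T + 1)).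
      by rewrite /s /mu /b; ring.
    by rewrite mulr_ge0 //; lra.
  by rewrite subr0 mulr_ge0 //; lra.
have cn : (0 <= n)%N by [].
have an : (t.+1 <= n)%N by apply: leq_trans kn; apply: ltnW.
have ne1 : 0%N <> k by move=> e; move: k1; rewrite -e.
have ne2 : t.+1 <> k by move=> e; move: tk; rewrite -e ltnn.
have [th [hf hv]] := @feas3 R n k x 0 t.+1 k cn an kn ltac:(by []) ne1 ne2 h0 h1 h2.
exists th; split => //; rewrite hv.
rewrite min0n minnn (minn_idPl _); last by apply: ltnW.
have ne1' : (0%:R : R) != (t.+1)%:R by rewrite eqr_nat.
have ne2' : (0%:R : R) != K by rewrite eqr_nat; apply/eqP.
have ne3' : ((t.+1)%:R : R) != K by rewrite eqr_nat; apply/eqP.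
have [_ e2 _] := @lag_id R _ _ _ mu s ne1' ne2' ne3'.
rewrite e2.
apply: min_l; lra.
Qed.

Lemma caseB (R : realType) (n k : nat) (x : R) : (2 <= n)%N -> (1 <= k <= n)%N -> 0 < x < 1 ->
  k%:R - 1 <= x * (n%:R - 1) -> x * (n%:R - 1) <= k%:R -> goodP n k x.
Proof.
move=> n2 /andP[k1 kn] /andP[x0 x1] bk1 bk2.
rewrite /goodP.
have n1r : (1 : R) <= n%:R by rewrite (_ : (1 : R) = 1%:R) // ler_nat (ltnW n2).
have k1r : (1 : R) <= k%:R by rewrite (_ : (1 : R) = 1%:R) // ler_nat.
have bn : x * (n%:R - 1) < n%:R - 1.
  by rewrite -[X in _ < X]mul1r ltr_pM2r // subr_gt0 (_ : (1 : R) = 1%:R) // ltr_nat.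
have kn' : (k < n)%N.
  have : (k%:R : R) < n%:R by lra.
  by rewrite ltr_nat.
set N := (n%:R : R) in n1r bk1 bk2 bn *.
set K := (k%:R : R) in k1r bk1 bk2 *.
set b := x * (N - 1) in bk1 bk2 bn *.
have KN : K < N by rewrite ltr_nat.
set mu := N * x. set s := N * x + N * (N - 1) * x ^+ 2.
have mub : mu = b + x by rewrite /mu /b; ring.
have x0' : 0 <= x by apply: ltW.
have mu0 : 0 <= mu by rewrite /mu mulr_ge0 //; lra.
have muN : mu <= N by rewrite /mu -[X in _ <= X]mulr1 ler_wpM2l //; lra.
have h0 : 0 <= lagp (0%:R : R) K N mu s.
  rewrite /lagp mulr0n; apply: div_pp.
    have -> : s - (K + N) * mu + K * N = (N - mu) * (K - b).
      by rewrite /s /mu /b; ring.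
    by apply: mulr_ge0; lra.
  by rewrite !sub0r mulrNN mulr_ge0 //; lra.
have h1 : 0 <= lagp K 0%:R N mu s.
  rewrite /lagp mulr0n; apply: div_nn.
    have -> : s - (0 + N) * mu + 0 * N = mu * (1 + b - N).
      by rewrite /s /mu /b; ring.
    by rewrite mulr_ge0_le0 //; lra.
  by rewrite subr0 mulr_ge0_le0 //; lra.
have h2 : 0 <= lagp N 0%:R K mu s.
  rewrite /lagp mulr0n; apply: div_pp.
    have -> : s - (0 + K) * mu + 0 * K = mu * (1 + b - K).
      by rewrite /s /mu /b; ring.
    by rewrite mulr_ge0 //; lra.
  by rewrite subr0 mulr_ge0 //; lra.
have cn : (0 <= n)%N by [].
have ne1 : 0%N <> k by move=> e; move: k1; rewrite -e.
have ne2 : 0%N <> n by move=> e; move: n2; rewrite -e.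
have ne3 : k <> n by move=> e; move: kn'; rewrite e ltnn.
have [th [hf hv]] := @feas3 R n k x 0 k n cn kn (leqnn n) ne1 ne2 ne3 h0 h1 h2.
exists th; split => //; rewrite hv.
rewrite min0n minnn (minn_idPr kn).
have ne1' : (0%:R : R) != K by rewrite eqr_nat; apply/eqP.
have ne2' : (0%:R : R) != N by rewrite eqr_nat; apply/eqP.
have ne3' : (K : R) != N by rewrite eqr_nat; apply/eqP.
have [e1 _ _] := @lag_id R _ _ _ mu s ne1' ne2' ne3'.
have K0 : K != 0 by rewrite pnatr_eq0 -lt0n.
have N0 : N != 0 by rewrite pnatr_eq0 -lt0n (ltnW n2).
have P0 : K * lagp (0%:R : R) K N mu s = (1 - x) * (K - b).
  by rewrite /lagp /s /mu /b mulr0n; field; rewrite K0 N0.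
have -> : lagp 0%:R K N mu s * 0%:R + lagp K 0%:R N mu s * K + lagp N 0%:R K mu s * K
   = K - (1 - x) * (K - b).
  rewrite -P0; move: e1.
  set p0 := lagp _ _ _ _ _; set pK := lagp _ _ _ _ _; set pN := lagp _ _ _ _ _ => e1.
  apply/eqP; rewrite -subr_eq0; apply/eqP.
  transitivity (K * (p0 + pK + pN - 1)); first by rewrite mulr0n; ring.
  by rewrite e1 subrr mulr0.
have Kp : 0 < K by lra.
case: (lerP K mu) => hmu.
  idtac.
  have i1 : (1 - x) * (K - b) <= (1 - x) * x by rewrite ler_wpM2l //; lra.
  have i2 : 4 * ((1 - x) * x) <= 1 by have := sqr_ge0 (2 * x - 1); nra.
  have i3 : K * (4 * ((1 - x) * (K - b))) <= K * 1 by rewrite ler_wpM2l //; lra.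
  nra.
idtac.
have i1 : N * (1 + b - K) <= N - K.
  have : (N - 1) * mu <= (N - 1) * K by rewrite ler_wpM2l //; lra.
  have -> : N * (1 + b - K) = N + (N - 1) * mu - N * K by rewrite /b /mu; ring.
  lra.
have i2 : 4 * K * (N - K) <= N * N by have := sqr_ge0 (N - 2 * K); nra.
have i3 : 0 <= 1 + b - K by lra.
have i5 : 4 * K * (1 + b - K) <= N.
  have i4 : N * (4 * K * (1 + b - K)) <= N * N.
    have : (4 * K) * (N * (1 + b - K)) <= (4 * K) * (N - K) by rewrite ler_wpM2l //; lra.
    nra.
  by rewrite -(ler_pM2l (_ : 0 < N)) //; lra.
have -> : 4 * K * (K - (1 - x) * (K - b)) = (4 * K - 1) * mu + x * (N - 4 * K * (1 + b - K)).
  by rewrite /b /mu; ring.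
by rewrite lerDl mulr_ge0 //; lra.
Qed.

Lemma caseC (R : realType) (n k : nat) (x : R) : (2 <= n)%N -> (1 <= k <= n)%N -> 0 < x < 1 ->
  k%:R <= x * (n%:R - 1) -> goodP n k x.
Proof.
move=> n2 /andP[k1 kn] /andP[x0 x1] bk.
rewrite /goodP.
have n1r : (1 : R) <= n%:R by rewrite (_ : (1 : R) = 1%:R) // ler_nat (ltnW n2).
have k1r : (1 : R) <= k%:R by rewrite (_ : (1 : R) = 1%:R) // ler_nat.
have bn : x * (n%:R - 1) < n%:R - 1.
  by rewrite -[X in _ < X]mul1r ltr_pM2r // subr_gt0 (_ : (1 : R) = 1%:R) // ltr_nat.
set N := (n%:R : R) in n1r bk bn *.
set K := (k%:R : R) in k1r bk *.
set b := x * (N - 1) in bk bn *.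
have b0 : 0 <= b by lra.
set t := Num.truncn b.
have /andP[tb bt] := truncn_itv b0; rewrite -/t in tb bt.
set T := (t%:R : R) in tb bt.
have hA : ((t.+1)%:R : R) = T + 1 by rewrite -natr1.
rewrite hA in bt.
have tn : (t.+2 <= n)%N.
  have : ((t.+1)%:R : R) < n%:R by rewrite hA; lra.
  by rewrite ltr_nat.
have TN : T + 1 + 1 <= N.
  have : ((t.+2)%:R : R) <= n%:R by rewrite ler_nat.
  by rewrite -natr1 hA.
have kt : (k <= t)%N.
  have : (k%:R : R) < (t.+1)%:R by rewrite hA; lra.
  by rewrite ltr_nat.
have T0 : 0 <= T by rewrite ler0n.
set mu := N * x. set s := N * x + N * (N - 1) * x ^+ 2.
have mub : mu = b + x by rewrite /mu /b; ring.
have x0' : 0 <= x by apply: ltW.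
have mu0 : 0 <= mu by rewrite /mu mulr_ge0 //; lra.
have muN : mu <= N by rewrite /mu -[X in _ <= X]mulr1 ler_wpM2l //; lra.
have h0 : 0 <= lagp T (t.+1)%:R N mu s.
  rewrite /lagp hA; apply: div_pp.
    have -> : s - (T + 1 + N) * mu + (T + 1) * N = (N - mu) * (T + 1 - b).
      by rewrite /s /mu /b; ring.
    by apply: mulr_ge0; lra.
  have -> : (T - (T + 1)) * (T - N) = N - T by ring.
  lra.
have h1 : 0 <= lagp ((t.+1)%:R : R) T N mu s.
  rewrite /lagp hA; apply: div_nn.
    have -> : s - (T + N) * mu + T * N = (N - mu) * (T - b).
      by rewrite /s /mu /b; ring.
    by rewrite mulr_ge0_le0 //; lra.
  have -> : (T + 1 - T) * (T + 1 - N) = T + 1 - N by ring.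
  lra.
have h2 : 0 <= lagp N T ((t.+1)%:R) mu s.
  rewrite /lagp hA; apply: div_pp.
    have -> : s - (T + (T + 1)) * mu + T * (T + 1) = mu * (1 - x) + (mu - T) * (mu - T - 1).
      by rewrite /s /mu /b; ring.
    case: (lerP (T + 1) mu) => hm.
      by apply: addr_ge0; apply: mulr_ge0; lra.
    have : (mu - T) * (T + 1 - mu) <= mu * (1 - x) by apply: ler_pM; lra.
    nra.
  by apply: mulr_ge0; lra.
have ne1 : t <> t.+1 by move=> e; move: (ltnSn t); rewrite -[X in (_ < X)%N]e ltnn.
have ne2 : t <> n by move=> e; move: tn; rewrite -e ltnNge ltnW.
have ne3 : t.+1 <> n by move=> e; move: tn; rewrite -e ltnn.
have tn1 : (t <= n)%N by apply: ltnW; apply: ltnW.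
have tn2 : (t.+1 <= n)%N by apply: ltnW.
have [th [hf hv]] := @feas3 R n k x t t.+1 n tn1 tn2 (leqnn n) ne1 ne2 ne3 h0 h1 h2.
exists th; split => //; rewrite hv.
rewrite (minn_idPr kt) (minn_idPr kn) (minn_idPr (leq_trans kt (leqnSn t))).
have ne1' : (T : R) != (t.+1)%:R by rewrite eqr_nat; apply/eqP.
have ne2' : (T : R) != N by rewrite eqr_nat; apply/eqP.
have ne3' : ((t.+1)%:R : R) != N by rewrite eqr_nat; apply/eqP.
have [e1 _ _] := @lag_id R _ _ _ mu s ne1' ne2' ne3'.
have -> : lagp T (t.+1)%:R N mu s * K + lagp (t.+1)%:R T N mu s * K + lagp N T (t.+1)%:R mu s * K = K.
  by rewrite -mulrDl -mulrDl e1 mul1r.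
apply: min_r; first lra.
have Kp : 0 < K by lra.
nra.
Qed.

Lemma good_all (R : realType) (n k : nat) (x : R) : (1 <= n)%N -> (1 <= k <= n)%N -> 0 <= x <= 1 ->
  goodP n k x.
Proof.
move=> n1 /andP[k1 kn] /andP[x0 x1].
have K0 : (0 : R) <= k%:R by rewrite ler0n.
have K1 : (1 : R) <= k%:R by rewrite (_ : (1 : R) = 1%:R) // ler_nat.
case: (eqVneq x 0) => [->|xn0].
  exists (symth n (p3 0 0 0 (1 : R) 0 0)).
  have [hf hv] := @three_point_feas R n k 0 0 0 0 1 0 0 (leq0n n) (leq0n n) (leq0n n)
     ler01 (lexx 0) (lexx 0) ltac:(by rewrite !addr0) ltac:(by rewrite !mulr0n !mulr0 !addr0)
     ltac:(by rewrite !mulr0n !mul0r !mulr0 expr0n /= mulr0 !addr0).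
  split => //; rewrite hv min0n !mulr0n !mulr0 !addr0.
  by apply: min_l; [lra | rewrite !mulr0].
case: (eqVneq x 1) => [->|xn1].
  exists (symth n (p3 n n n (1 : R) 0 0)).
  have [hf hv] := @three_point_feas R n k 1 n n n 1 0 0 (leqnn n) (leqnn n) (leqnn n)
     ler01 (lexx 0) (lexx 0) ltac:(by rewrite !addr0) ltac:(by rewrite !mul0r !addr0 mul1r mulr1)
     ltac:(by rewrite !mul0r !addr0 mul1r expr1n mulr1).
  split => //; rewrite hv (minn_idPr kn) !mul0r !addr0 mul1r.
  by apply: min_r; [lra | nra].
have x0' : 0 < x by rewrite lt_def xn0.
have x1' : x < 1 by rewrite lt_def eq_sym xn1.
case: (ltnP 1 n) => n2; last first.
  have n_1 : n = 1%N by apply/eqP; rewrite eqn_leq n2.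
  have k_1 : k = 1%N by move: kn; rewrite n_1 => kn; apply/eqP; rewrite eqn_leq kn k1.
  subst n k.
  exists (symth 1 (p3 0 1 1 (1 - x) x 0)).
  have [hf hv] := @three_point_feas R 1 1 x 0 1 1 (1 - x) x 0 (leq0n 1) (leqnn 1) (leqnn 1)
     ltac:(lra) (ltW x0') (lexx 0) ltac:(by rewrite addr0 subrK)
     ltac:(by rewrite mulr0n mulr0 add0r mul0r addr0 mulr1 mul1r)
     ltac:(by rewrite mulr0n !mul0r !mulr0 subrr !mulr0 !addr0 mul0r).
  split => //; rewrite hv /= !mulr0 mul0r add0r addr0 mulr1.
  apply: min_l; first lra. rewrite minnn ?mulr1n ?mulr1 ?mul1r; lra.
case: (ltrP (x * (n%:R - 1)) (k%:R - 1)) => h1.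
  by apply: caseA => //; [rewrite k1 kn | rewrite x0' x1'].
case: (lerP (x * (n%:R - 1)) k%:R) => h2.
  by apply: caseB => //; [rewrite k1 kn | rewrite x0' x1'].
by apply: caseC => //; [rewrite k1 kn | rewrite x0' x1' | apply: ltW].
Qed.

Lemma card_sum (R : realType) (n : nat) (S : {set 'I_n}) :
  (#|S|%:R : R) = \sum_(i : 'I_n) (if i \in S then 1 else 0).
Proof. by rewrite -big_mkcond sumr_const. Qed.

Lemma first_moment (R : realType) (n : nat) (x : R) (th : {ffun {set 'I_n} -> R}) :
  closure_feasible (fun _ => x) th ->
  \sum_(S : {set 'I_n}) th S * #|S|%:R = n%:R * x.
Proof.
move=> [_ [_ hm]].
transitivity (\sum_(S : {set 'I_n}) \sum_(i : 'I_n) (if i \in S then th S else 0)).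
  apply: eq_bigr => S _; rewrite -big_mkcond /= sumr_const mulr_natr //.
rewrite exchange_big /=.
transitivity (\sum_(i : 'I_n) x).
  by apply: eq_bigr => i _; rewrite -big_mkcond /= hm.
by rewrite sumr_const card_ord mulr_natl.
Qed.

Lemma second_moment (R : realType) (n : nat) (x : R) (th : {ffun {set 'I_n} -> R}) :
  (1 <= n)%N -> pairwise_feasible (fun _ => x) th ->
  \sum_(S : {set 'I_n}) th S * #|S|%:R ^+ 2 = n%:R * x + n%:R * (n%:R - 1) * x ^+ 2.
Proof.
move=> n1 [[_ [_ hm]] hp].
transitivity (\sum_(S : {set 'I_n}) \sum_(i : 'I_n) \sum_(j : 'I_n)
    (if (i \in S) && (j \in S) then th S else 0)).
  apply: eq_bigr => S _; rewrite expr2 card_sum big_distrl /= big_distrr /=.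
  apply: eq_bigr => i _; rewrite !big_distrr /=; apply: eq_bigr => j _.
  case: (boolP (i \in S)) => hi; case: (boolP (j \in S)) => hj /=; by rewrite ?mul1r ?mul0r ?mulr1 ?mulr0.
transitivity (\sum_(i : 'I_n) \sum_(j : 'I_n) (if i == j then x else x * x)).
  rewrite exchange_big /=; apply: eq_bigr => i _; rewrite exchange_big /=; apply: eq_bigr => j _.
  rewrite -big_mkcond /=.
  case: (eqVneq i j) => [<-|ij].
    by under eq_bigl do rewrite andbb; exact: hm.
  case: (ltngtP i j) => h.
  - by rewrite hp.
  - by under eq_bigl do rewrite andbC; rewrite hp.
  - by move: ij; rewrite -val_eqE /= h eqxx.
transitivity (\sum_(i : 'I_n) (x + (n%:R - 1) * x ^+ 2)).
  apply: eq_bigr => i _; rewrite (bigD1 i) //= eqxx; congr (_ + _).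
  rewrite (eq_bigr (fun _ => x * x)); last by move=> j; rewrite eq_sym => /negbTE ->.
  by rewrite sumr_const cardC1 card_ord -subn1 -[LHS]mulr_natl natrB // expr2.
by rewrite sumr_const card_ord -mulr_natl; ring.
Qed.

Lemma one_point (R : realType) (n k c : nat) (x : R) : (1 <= n)%N -> (c <= n)%N ->
  c%:R = n%:R * x ->
  closure_feasible (fun _ => x) (symth n (p3 c c c (1 : R) 0 0)) /\
  lp_value (@budget_fun R n k) (symth n (p3 c c c (1 : R) 0 0)) = (minn c k)%:R.
Proof.
move=> n1 cn hc; split; last first.
  rewrite /lp_value /budget_fun (symth_total _ _ (fun m => (minn m k)%:R)).
  by rewrite (sum_p3 1 0 0 (fun m => (minn m k)%:R) cn cn cn) !mul0r !addr0 mul1r.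
split.
  move=> S; rewrite ffunE; apply: divr_ge0 => //.
  by rewrite /p3 !addr_ge0 // mulr_ge0 // ?ler01.
split.
  have := symth_total n (p3 c c c (1 : R) 0 0) (fun _ => 1).
  rewrite (sum_p3 1 0 0 (fun _ => 1) cn cn cn) !mulr1 !addr0 => e; rewrite -[RHS]e.
  by apply: eq_bigr => S _; rewrite mulr1.
move=> i.
have n0 : (n%:R : R) != 0 by rewrite pnatr_eq0 -lt0n.
rewrite symth_marg -mulr_suml.
rewrite (eq_bigr (fun m : 'I_n.+1 => p3 c c c 1 0 0 m * (fun m : nat => (m%:R : R)) m)) //.
by rewrite (sum_p3 1 0 0 (fun m : nat => (m%:R : R)) cn cn cn) !mul0r !addr0 mul1r hc mulrC mulKf.
Qed.

Lemma val_ub (R : realType) (n k : nat) (x : R) (th : {ffun {set 'I_n} -> R}) :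
  closure_feasible (fun _ => x) th ->
  lp_value (@budget_fun R n k) th <= n%:R * x /\ lp_value (@budget_fun R n k) th <= k%:R.
Proof.
move=> hf; have [h0 [h1 _]] := hf; rewrite /lp_value /budget_fun; split.
  rewrite -(first_moment hf); apply: ler_sum => S _; apply: ler_wpM2l => //.
  by rewrite ler_nat geq_minl.
apply: (@le_trans _ _ (\sum_(S : {set 'I_n}) th S * k%:R)); last by rewrite -mulr_suml h1 mul1r.
apply: ler_sum => S _; apply: ler_wpM2l => //.
by rewrite ler_nat geq_minr.
Qed.

Lemma half_ub (R : realType) (k : nat) (th : {ffun {set 'I_(k.*2)} -> R}) :
  (1 <= k)%N -> pairwise_feasible (fun _ => (2^-1 : R)) th ->
  lp_value (@budget_fun R k.*2 k) th <= k%:R - 4^-1.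
Proof.
move=> k1 hp.
have n1 : (1 <= k.*2)%N by rewrite -muln2; lia.
have m1 := first_moment hp.1.
have m2 := second_moment n1 hp.
have [h0 _] := hp.1.
set K := (k%:R : R).
have Kp : 0 < K by rewrite ltr0n.
have nK : (k.*2%:R : R) = 2 * K by rewrite -muln2 natrM mulrC.
rewrite nK in m1 m2.
rewrite /lp_value /budget_fun.
apply: (@le_trans _ _ (\sum_(S : {set 'I_(k.*2)}) th S * (3 / 2 * #|S|%:R - (2 * K)^-1 * #|S|%:R ^+ 2))).
  apply: ler_sum => S _; apply: ler_wpM2l => //.
  have Sn : (#|S| <= k.*2)%N by rewrite -[X in (_ <= X)%N](card_ord k.*2) max_card.
  have Sn' : (#|S|%:R : R) <= 2 * K by rewrite -nK ler_nat.
  set m := (#|S|%:R : R) in Sn' *.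
  have m0 : 0 <= m by rewrite ler0n.
  rewrite -(ler_pM2l (_ : 0 < 2 * K)); last by lra.
  have -> : 2 * K * (3 / 2 * m - (2 * K)^-1 * m ^+ 2) = 3 * K * m - m ^+ 2.
    by field; lra.
  case: (leqP #|S| k) => hs.
    rewrite -/m.
    have : m <= K by rewrite ler_nat.
    nra.
  rewrite -/K.
  have : K <= m by rewrite ler_nat ltnW.
  nra.
have -> : \sum_(S : {set 'I_(k.*2)}) th S * (3 / 2 * #|S|%:R - (2 * K)^-1 * #|S|%:R ^+ 2)
   = 3 / 2 * (\sum_(S : {set 'I_(k.*2)}) th S * #|S|%:R)
     - (2 * K)^-1 * (\sum_(S : {set 'I_(k.*2)}) th S * #|S|%:R ^+ 2).
  by rewrite !mulr_sumr -sumrB; apply: eq_bigr => S _; ring.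
rewrite m1 m2.
have -> : 3 / 2 * (2 * K / 2) - (2 * K)^-1 * (2 * K / 2 + 2 * K * (2 * K - 1) * 2^-1 ^+ 2)
   = K - 4^-1 by field; lra.
done.
Qed.

Lemma sup_ge (R : realType) (E : set R) v M : E v -> ubound E M -> v <= sup E.
Proof. move=> Ev ub; apply: sup_upper_bound => //; split; [by exists v | by exists M]. Qed.

Lemma sup_le (R : realType) (E : set R) v M : E v -> ubound E M -> sup E <= M.
Proof. by move=> Ev ub; apply: ge_sup => //; exists v. Qed.

Theorem mainTheorem14 (R : realType) (n k : nat) :
  (1 <= n)%N -> (1 <= k <= n)%N ->
  (forall x : R, 0 <= x <= 1 ->
     let fp := concave_closure (@budget_fun R n k) (fun _ => x) in
     let fpp := upper_pairwise_ext (@budget_fun R n k) (fun _ => x) in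
     (fpp = 0 -> fp = 0) /\
     (fpp != 0 -> fp / fpp <= (4 * k%:R) / (4 * k%:R - 1))) /\
  (~~ odd n -> k = n./2 ->
     let fp := concave_closure (@budget_fun R n k) (fun _ => 2^-1) in
     let fpp := upper_pairwise_ext (@budget_fun R n k) (fun _ => 2^-1) in
     fp / fpp = (4 * k%:R) / (4 * k%:R - 1)).
Proof.
move=> n1 /andP[k1 kn].
have K1 : (1 : R) <= k%:R by rewrite (_ : (1 : R) = 1%:R) // ler_nat.
split.
  move=> x hx fp fpp; rewrite /fp /fpp /concave_closure /upper_pairwise_ext.
  have [x0 x1] := andP hx.
  have [th [hpf hv]] := @good_all R n k x n1 (introT andP (conj k1 kn)) hx.
  set Ep := [set v | _]%classic. set Ec := [set v | _]%classic.
  set m := Num.min (n%:R * x) k%:R in hv *.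
  have m0 : 0 <= m by rewrite le_min mulr_ge0 ?ler0n.
  have ubc : ubound Ec m.
    move=> y [t [ht ->]]; have [u1 u2] := val_ub k ht; by rewrite le_min u1 u2.
  have ubp : ubound Ep m by move=> y [t [ht ->]]; apply: ubc; exists t; split => //; exact: ht.1.
  have Ecv : Ec (lp_value (@budget_fun R n k) th) by exists th; split => //; exact: hpf.1.
  have Epv : Ep (lp_value (@budget_fun R n k) th) by exists th.
  have B := sup_ge Epv ubp.
  have C := sup_ge Ecv ubc.
  have D := sup_le Ecv ubc.
  set v := lp_value _ th in hv B C D Ecv Epv.
  set fc := sup Ec in C D *. set fq := sup Ep in B *.
  set K := (k%:R : R) in K1 hv *.
  have v0 : 0 <= v by nra.
  split.
    move=> fq0; rewrite fq0 in B.
    have : m <= 0 by nra.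
    move=> mle; apply/eqP; rewrite eq_le; apply/andP; split; lra.
  move=> fqn0.
  have fqp : 0 < fq by rewrite lt_def fqn0; lra.
  rewrite ler_pdivrMr // mulrAC ler_pdivlMr; last lra.
  nra.
move=> ev hk.
have hn : n = k.*2 by rewrite hk -[X in X = _](odd_double_half n) (negbTE ev) add0n.
clear hk; subst n => fp fpp.
rewrite /fp /fpp /concave_closure /upper_pairwise_ext.
have h2 : (0:R) <= 2^-1 by lra.
have h3 : (2^-1 : R) <= 1 by lra.
have hx := introT andP (conj h2 h3).
have [th [hpf hv]] := @good_all R k.*2 k 2^-1 n1 (introT andP (conj k1 kn)) hx.
set Ec := [set v | _]%classic. set Ep := [set v | _]%classic.
have nK : (k.*2%:R : R) = 2 * k%:R by rewrite -muln2 natrM mulrC.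
have hc : (k%:R : R) = k.*2%:R * 2^-1 by rewrite nK; field.
have [op1 op2] := one_point k n1 kn hc.
have ubc : ubound Ec k%:R.
  by move=> y [t [ht ->]]; have [u1 u2] := val_ub k ht.
have ubp : ubound Ep (k%:R - 4^-1) by move=> y [t [ht ->]]; apply: half_ub.
have Ecv : Ec (lp_value (@budget_fun R k.*2 k) (symth k.*2 (p3 k k k 1 0 0))) by exists (symth k.*2 (p3 k k k 1 0 0)).
have Epv : Ep (lp_value (@budget_fun R k.*2 k) th) by exists th.
have B := sup_ge Epv ubp.
have B' := sup_le Epv ubp.
have C := sup_ge Ecv ubc.
have D := sup_le Ecv ubc.
rewrite op2 minnn in C.
rewrite nK in hv.
set v := lp_value _ th in hv B.
set fc := sup Ec in C D *. set fq := sup Ep in B B' *.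
set K := (k%:R : R) in K1 hv C D B' *.
have e1 : fc = K by apply/eqP; rewrite eq_le C D.
have mm : Num.min (2 * K * 2^-1) K = K by rewrite (_ : 2 * K * 2^-1 = K) ?minxx //; field.
rewrite mm in hv.
have e2 : fq = K - 4^-1.
  apply/eqP; rewrite eq_le B' /=.
  apply: le_trans B.
  rewrite -(ler_pM2l (_ : 0 < 4 * K)); last lra.
  have -> : 4 * K * (K - 4^-1) = (4 * K - 1) * K by field.
  exact: hv.
rewrite e1 e2; field.
apply: lt0r_neq0; rewrite -/K; lra.
Qed.
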